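(* The function $\overrightarrow{\mathrm{AC}}$ does not satisfy the triangle inequality: there exist languages $X,Y,Z$ over a finite alphabet with $\overrightarrow{\mathrm{AC}}(X,Z)>\overrightarrow{\mathrm{AC}}(X,Y)+\overrightarrow{\mathrm{AC}}(Y,Z)$.
   Context: For words $x,y$, $\mathrm{ed}(x,y)$ is the Levenshtein edit distance (minimum number of single-letter insertions, deletions and substitutions transforming $x$ into $y$). For languages $X,Y$, \[ \overrightarrow{\mathrm{AC}}(X,Y)=\lim_{n\to\infty}\ \sup_{x\in X,\ |x|\ge n}\ \inf_{y\in Y}\frac{\mathrm{ed}(x,y)}{|x|}. \] *)

(* Defs.v *)
From mathcomp Require Import all_boot all_order all_algebra.
From mathcomp Require Import all_classical all_reals all_analysis.
Set Implicit Arguments. Unset Strict Implicit. Unset Printing Implicit Defensive.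
Import Order.TTheory GRing.Theory Num.Theory.
Local Open Scope classical_set_scope.
Local Open Scope ring_scope.

Section Edit.
Variable A : eqType.

Definition edit1 (x y : seq A) : Prop :=
  exists (u v : seq A) (a b : A),
    (x = u ++ a :: v /\ y = u ++ v) \/
    (x = u ++ v /\ y = u ++ a :: v) \/
    (x = u ++ a :: v /\ y = u ++ b :: v).

Fixpoint reach (n : nat) (x y : seq A) : Prop :=
  match n with
  | 0 => x = y
  | n'.+1 => exists z, edit1 x z /\ reach n' z y
  end.

Definition ed (x y : seq A) : nat :=
  xget 0%N [set n | reach n x y /\ forall m, reach m x y -> (n <= m)%N].
End Edit.

Section ACsec.
Variables (R : realType) (A : finType).

Definition acn (X Y : set (seq A)) (n : nat) : \bar R :=
  ereal_sup [set ereal_inf [set (((ed x y)%:R / (size x)%:R : R))%:E | y in Y]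
            | x in [set x | X x /\ (n <= size x)%N]].

Definition ACdir (X Y : set (seq A)) : \bar R := limn (acn X Y).
End ACsec.

(* Main.v *)
Require Import Defs.
From mathcomp Require Import all_boot all_order all_algebra.
From mathcomp Require Import all_classical all_reals all_analysis.
From mathcomp Require Import zify ring lra.
Import Order.TTheory GRing.Theory Num.Theory.
Local Open Scope ring_scope.

Lemma ed_char (A : eqType) (x y : seq A) d :
  reach d x y -> (forall m, reach m x y -> (d <= m)%N) -> ed x y = d.
Proof.
move=> Hd Hm; rewrite /ed.
have := @xgetPex _ 0%N [set n | reach n x y /\ forall m, reach m x y -> (n <= m)%N].
case; first by exists d.
move=> H1 H2; apply/eqP; rewrite eqn_leq H2 //=; exact: Hm.
Qed.

Lemma edit1_size (x z : seq unit) : edit1 x z ->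
  (size x <= size z + 1)%N /\ (size z <= size x + 1)%N.
Proof.
move=> [u [v [a [b [[-> ->]|[[-> ->]|[-> ->]]]]]]]; rewrite !size_cat /=; lia.
Qed.

Lemma reach_size n (x y : seq unit) : reach n x y ->
  (size x <= size y + n)%N /\ (size y <= size x + n)%N.
Proof.
elim: n x => [|n IH] x /=; first by move=> ->; lia.
move=> [z [/edit1_size H1 /IH H2]]; lia.
Qed.

Lemma unit_nseq (s : seq unit) : s = nseq (size s) tt.
Proof. by elim: s => [|[] s IH] //=; rewrite -IH. Qed.

Lemma reach_del m k : reach k (nseq (m + k) tt) (nseq m tt).
Proof.
elim: k => [|k IH] /=; first by rewrite addn0.
exists (nseq (m + k) tt); split => //.
exists [::], (nseq (m + k) tt), tt, tt; left; split => //.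
by rewrite addnS.
Qed.

Lemma reach_ins k m : reach k (nseq m tt) (nseq (m + k) tt).
Proof.
elim: k m => [|k IH] m /=; first by rewrite addn0.
exists (nseq m.+1 tt); split.
  by exists [::], (nseq m tt), tt, tt; right; left.
by rewrite addnS -addSn; apply: IH.
Qed.

Lemma ed_unit (s t : seq unit) :
  ed s t = ((size s - size t) + (size t - size s))%N.
Proof.
apply: ed_char; last by move=> m /reach_size; lia.
rewrite (unit_nseq s) (unit_nseq t) !size_nseq.
case: (leqP (size t) (size s)) => H.
  have -> : (size t - size s = 0)%N by lia.
  rewrite addn0; have := reach_del (size t) (size s - size t); by rewrite subnKC.
have -> : (size s - size t = 0)%N by lia.
rewrite add0n; have := reach_ins (size t - size s) (size s); by rewrite subnKC // ltnW.
Qed.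

Definition L (p : nat) : set (seq unit) :=
  [set s | exists k, size s = (p * 100 ^ k)%N].

Lemma pow_cases (j k : nat) :
  (100 ^ j = 100 ^ k \/ 100 * 100 ^ j <= 100 ^ k \/ 100 * 100 ^ k <= 100 ^ j)%N.
Proof.
case: (ltngtP j k) => H.
- right; left; rewrite -expnS; apply: leq_pexp2l => //.
- right; right; rewrite -expnS; apply: leq_pexp2l => //.
- by left; rewrite H.
Qed.

Section AC.
Variable R : realType.

Lemma acdir_L (p q : nat) :
  (0 < p)%N -> (p <= q)%N ->
  (forall T U : nat, (U = T \/ 100 * U <= T \/ 100 * T <= U)%N ->
     ((q - p) * T <= (q * U - p * T) + (p * T - q * U))%N) ->
  @ACdir R unit (L p) (L q) = ((q - p)%:R / p%:R : R)%:E.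
Proof.
move=> p0 pq key.
set r : R := (q - p)%:R / p%:R.
have inner : forall x, L p x ->
    ereal_inf [set (((ed x y)%:R / (size x)%:R : R))%:E | y in L q] = r%:E.
  move=> x [k xk].
  have T0 : (0 < 100 ^ k)%N by rewrite expn_gt0.
  have sx0 : (0 : R) < (size x)%:R by rewrite ltr0n xk muln_gt0 p0.
  apply/le_anti/andP; split.
    apply: ereal_inf_lbound.
    exists (nseq (q * 100 ^ k) tt); first by exists k; rewrite size_nseq.
    rewrite ed_unit size_nseq xk; congr (_%:E).
    have -> : (p * 100 ^ k - q * 100 ^ k = 0)%N by nia.
    rewrite add0n -mulnBl /r !natrM; field.
    by rewrite !pnatr_eq0; apply/andP; split; apply/eqP; lia.
  apply: le_ereal_inf_tmp => _ [y [j yj] <-].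
  rewrite lee_fin ed_unit xk yj ler_pdivlMr -?xk // xk /r natrM mulrA.
  rewrite mulfVK; last by rewrite pnatr_eq0 -lt0n.
  rewrite -natrM ler_nat.
  have := pow_cases j k.
  by move/key; lia.
have acn_c : forall n, @acn R unit (L p) (L q) n = r%:E.
  move=> n; apply/le_anti/andP; split.
    apply: ge_ereal_sup => _ [x [Lx _] <-]; by rewrite inner.
  apply: ereal_sup_ubound.
  exists (nseq (p * 100 ^ n) tt).
    split; first by exists n; rewrite size_nseq.
    rewrite size_nseq; apply: (leq_trans (ltnW (ltn_expl n (isT : (1 < 100)%N)))).
    by rewrite leq_pmull.
  by apply: inner; exists n; rewrite size_nseq.
rewrite /ACdir (_ : @acn R unit (L p) (L q) = fun _ => r%:E); last by apply: funext.
by apply: lim_cst.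
Qed.

End AC.

Theorem mainTheorem12 (R : realType) :
  exists (A : finType) (X Y Z : set (seq A)) (a b c : R),
    @ACdir R A X Z = a%:E /\ @ACdir R A X Y = b%:E /\ @ACdir R A Y Z = c%:E /\ b + c < a.
Proof.
exists unit, (L 16), (L 20), (L 25).
exists (9%:R / 16%:R), (4%:R / 16%:R), (5%:R / 20%:R).
split; first by apply: acdir_L => // T U; lia.
split; first by apply: acdir_L => // T U; lia.
split; first by apply: acdir_L => // T U; lia.
lra.
Qed.
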